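(* Let $q$ be even and $u\in\mathbf{SL}_n(q)$ unipotent of type $\lambda=(\lambda_1,\dots,\lambda_k)$, and assume $\lambda_i\ge\lambda_{i+1}\ge3$ for some $1\le i\le k-1$. Then the conjugacy class $\mathcal{O}_u$ in $\mathbf{SL}_n(q)$ is of type D.
   Context: Unipotent type $(\lambda_1\ge\dots\ge\lambda_k)$ = sizes of Jordan blocks. Conjugacy classes are racks with $x\triangleright y=xyx^{-1}$. A subrack $Y$ is decomposable if $Y=R\sqcup S$ with nonempty subracks $R,S$, $Y\triangleright R=R$, $Y\triangleright S=S$. Type D: a decomposable subrack $R\sqcup S$ with $r\in R,s\in S$ and $r\triangleright(s\triangleright(r\triangleright s))\neq s$. *)

(* Defs.v *)
From HB Require Import structures.
From mathcomp Require Import all_boot all_order all_algebra all_fingroup.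
Set Implicit Arguments. Unset Strict Implicit. Unset Printing Implicit Defensive.
Import GRing.Theory.
Local Open Scope ring_scope.

Section Defs.
Variables (F : finFieldType) (n : nat).

Definition SLset : {set 'M[F]_n} := [set A : 'M[F]_n | \det A == 1].

Definition rop (x y : 'M[F]_n) : 'M[F]_n := x *m y *m invmx x.

Definition conj_classSL (u : 'M[F]_n) : {set 'M[F]_n} :=
  [set rop g u | g in SLset].

Definition unipotent (u : 'M[F]_n) : Prop :=
  exists k : nat, iter k (mulmx (u - 1%:M)) 1%:M = 0.

(* unipotent Jordan matrix with consecutive diagonal blocks of sizes s
   (block boundaries at the partial sums of s) *)
Definition jordan_unip (s : seq nat) : 'M[F]_n :=
  \matrix_(i < n, j < n)
    ((nat_of_ord i == nat_of_ord j)
     || ((nat_of_ord j == (nat_of_ord i).+1) && (nat_of_ord j \notin scanl addn 0%N s)))%:R.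

Definition unip_type (u : 'M[F]_n) (lam : seq nat) : Prop :=
  [/\ sorted geq lam, all (fun m => 0 < m)%N lam, sumn lam = n
    & exists2 P : 'M[F]_n, P \in unitmx & u = P *m jordan_unip lam *m invmx P].

Definition subrack (Y : {set 'M[F]_n}) : Prop :=
  {in Y &, forall x y, rop x y \in Y}.

Definition act_set (Y R : {set 'M[F]_n}) : {set 'M[F]_n} :=
  [set rop y r | y in Y, r in R].

Definition decomposition (Y R S : {set 'M[F]_n}) : Prop :=
  subrack Y /\ subrack R /\ subrack S /\ R != set0 /\ S != set0 /\
  [disjoint R & S] /\ Y = R :|: S /\ act_set Y R = R /\ act_set Y S = S.

Definition typeD (O : {set 'M[F]_n}) : Prop :=
  exists Y R S : {set 'M[F]_n},
    [/\ Y \subset O, decomposition Y R S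
      & exists r s, [/\ r \in R, s \in S & rop r (rop s (rop r s)) != s]].

End Defs.

(* Main.v *)
Require Import Defs.
From HB Require Import structures.
From mathcomp Require Import all_boot all_order all_algebra all_fingroup.
From mathcomp Require Import zify.
Set Implicit Arguments. Unset Strict Implicit. Unset Printing Implicit Defensive.

Lemma foldl_addn c s : foldl addn c s = c + sumn s.
Proof. by elim: s c => [|x s IH] c /=; rewrite ?addn0 // IH addnA. Qed.

Lemma mem_scanl_bnd c s y : y \in scanl addn c s -> c <= y <= c + sumn s.
Proof.
elim: s c => [|x s IH] c //=; rewrite inE => /orP[/eqP ->|/IH]; first lia.
lia.
Qed.

Lemma lam_split (lam : seq nat) i : i.+1 < size lam ->
  lam = take i lam ++ nth 0 lam i :: nth 0 lam i.+1 :: drop i.+2 lam.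
Proof.
move=> h; rewrite -(@drop_nth _ 0 i.+1) // -(@drop_nth _ 0 i) ?(ltn_trans _ h) //.
by rewrite cat_take_drop.
Qed.

Lemma scl_facts' pre a b post : 3 <= a -> 3 <= b ->
  [/\ sumn pre + a \in scanl addn 0 (pre ++ a :: b :: post),
      (forall y, y \in scanl addn 0 (pre ++ a :: b :: post) ->
         [\/ y + 3 <= sumn pre + a, y = sumn pre + a | sumn pre + a + 3 <= y])
    & sumn pre + a + 3 <= sumn (pre ++ a :: b :: post)].
Proof.
move=> ha hb.
rewrite scanl_cat foldl_addn /= add0n sumn_cat /=.
split.
- by rewrite mem_cat inE eqxx orbT.
- move=> y; rewrite mem_cat inE => /orP[/mem_scanl_bnd|/orP[/eqP ->|]].
  + move=> H; apply: Or31; lia.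
  + by apply: Or32.
  + rewrite inE => /orP[/eqP ->|/mem_scanl_bnd]; move=> *; apply: Or33; lia.
- lia.
Qed.

Lemma scl_facts (lam : seq nat) i : i.+1 < size lam ->
  3 <= nth 0 lam i -> 3 <= nth 0 lam i.+1 ->
  [/\ sumn (take i lam) + nth 0 lam i \in scanl addn 0 lam,
      (forall y, y \in scanl addn 0 lam ->
         [\/ y + 3 <= sumn (take i lam) + nth 0 lam i, y = sumn (take i lam) + nth 0 lam i
           | sumn (take i lam) + nth 0 lam i + 3 <= y])
    & sumn (take i lam) + nth 0 lam i + 3 <= sumn lam].
Proof.
move=> h ha hb.
have e := lam_split h.
have := scl_facts' (take i lam) (drop i.+2 lam) ha hb.
by rewrite -e.
Qed.

Import GRing.Theory.
Local Open Scope ring_scope.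

Definition UT (F : finFieldType) n (A : 'M[F]_n) : bool :=
  [forall i : 'I_n, forall j : 'I_n, ((j < i)%N ==> (A i j == 0)) && ((i == j) ==> (A i j == 1))].

Lemma UTP (F : finFieldType) n (A : 'M[F]_n) :
  reflect ((forall i j : 'I_n, (j < i)%N -> A i j = 0) /\ (forall i, A i i = 1)) (UT A).
Proof.
apply: (iffP idP).
  move=> /forallP H; split.
    by move=> i j lt; move: (H i) => /forallP/(_ j)/andP[/implyP/(_ lt)/eqP].
  by move=> i; move: (H i) => /forallP/(_ i)/andP[_ /implyP/(_ (eqxx _))/eqP].
move=> [H1 H2]; apply/forallP=> i; apply/forallP=> j; apply/andP; split.
  by apply/implyP=> lt; rewrite H1.
by apply/implyP=> /eqP <-; rewrite H2.
Qed.

Lemma UT_mul (F : finFieldType) n (A B : 'M[F]_n) : UT A -> UT B -> UT (A *m B).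
Proof.
move=> /UTP[A1 A2] /UTP[B1 B2]; apply/UTP; split.
  move=> i j lt; rewrite !mxE big1 // => k _.
  case: (ltnP k i) => [ki|ik]; first by rewrite A1 ?mul0r.
  by rewrite B1 ?mulr0 //; apply: leq_trans lt ik.
move=> i; rewrite !mxE (bigD1 i) //= A2 B2 mulr1 big1 ?addr0 // => k ki.
case: (ltngtP k i) => [lt|lt|/val_inj e]; first by rewrite A1 ?mul0r.
  by rewrite B1 ?mulr0.
by rewrite e eqxx in ki.
Qed.

Lemma UT1 (F : finFieldType) n : UT (1%:M : 'M[F]_n).
Proof.
apply/UTP; split; last by move=> i; rewrite mxE eqxx.
by move=> i j lt; rewrite mxE; case: eqP => // e; rewrite e ltnn in lt.
Qed.

Lemma UT_iter (F : finFieldType) n (A : 'M[F]_n) k : UT A -> UT (iter k (mulmx A) 1%:M).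
Proof. by move=> H; elim: k => [|k IH] /=; [exact: UT1| exact: UT_mul]. Qed.

Lemma chi_mul (F : finFieldType) n (A B : 'M[F]_n) (c c' : 'I_n) :
  c' = c.+1 :> nat -> UT A -> UT B -> (A *m B) c c' = A c c' + B c c'.
Proof.
move=> hc /UTP[A1 A2] /UTP[B1 B2]; rewrite !mxE (bigD1 c) //= A2 mul1r.
have cc : c' != c by apply/eqP => e; move: hc; rewrite e; lia.
rewrite (bigD1 c') //= B2 mulr1 big1 ?addr0 ?[_ + A c c']addrC //.
move=> k /andP[kc kc'].
case: (ltnP k c) => [lt|le]; first by rewrite A1 ?mul0r.
rewrite B1 ?mulr0 //.
have h1 : (nat_of_ord k != c) by [].
have h2 : (nat_of_ord k != c.+1) by rewrite -hc.
move: h1 h2 le; rewrite hc; lia.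
Qed.

Definition pw (F : finFieldType) n (A : 'M[F]_n) k := iter k (mulmx A) 1%:M.

Lemma pwD (F : finFieldType) n (A : 'M[F]_n) a b : pw A (a + b) = pw A a *m pw A b.
Proof. rewrite /pw; elim: a => [|a IH] /=; first by rewrite mul1mx. by rewrite IH mulmxA. Qed.

Lemma pw_unit (F : finFieldType) n (A : 'M[F]_n) a : A \in unitmx -> pw A a \in unitmx.
Proof. rewrite /pw => uA; elim: a => [|a IH] /=; first exact: unitmx1. by rewrite unitmx_mul uA IH. Qed.

Lemma pw_gen (F : finFieldType) n (A : 'M[F]_n) a b : A \in unitmx -> (a < b)%N ->
  pw A a = pw A b -> invmx A = pw A (b - a).-1.
Proof.
move=> uA ab e.
have e2 := pwD A a (b - a).
have hab : (a + (b - a) = b)%N by lia.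
rewrite hab in e2. have {e2} e2 := etrans e e2.
have e3 : pw A (b - a) = 1%:M.
  have := congr1 (mulmx (invmx (pw A a))) e2.
  by rewrite mulKmx ?pw_unit // mulVmx ?pw_unit // => ->.
have hd : (b - a = (b - a).-1.+1)%N by lia.
move: e3; rewrite hd; move: (b - a).-1 => d.
rewrite [pw A d.+1]/pw /= -/(pw A d) => e4.
have := congr1 (mulmx (invmx A)) e4; rewrite mulKmx // mulmx1 => <-; done.
Qed.

Lemma inv_iter (F : finFieldType) n (A : 'M[F]_n) : A \in unitmx ->
  exists k, invmx A = iter k (mulmx A) 1%:M.
Proof.
move=> uA.
pose f (k : 'I_(#|{: 'M[F]_n}|.+1)) := pw A k.
have : ~~ injectiveb f.
  by apply/negP => /injectiveP /leq_card; rewrite card_ord ltnn.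
move=> H; have := elimT (fintype.injectivePn f) H; case=> x [y xy fxy].
case: (ltngtP x y) => [lt|lt|e].
- by eexists; exact: pw_gen uA lt fxy.
- by eexists; exact: pw_gen uA lt (esym fxy).
by rewrite (val_inj e) eqxx in xy.
Qed.

Lemma wid_proof p w n (hpw : (p + w <= n)%N) (i : 'I_w) : (p + i < n)%N.
Proof. move: (ltn_ord i) hpw; lia. Qed.
Definition wid p w n (hpw : (p + w <= n)%N) (i : 'I_w) : 'I_n := Ordinal (wid_proof hpw i).
Definition win (F : finFieldType) p w n (hpw : (p + w <= n)%N) (A : 'M[F]_n) : 'M[F]_w :=
  \matrix_(i < w, j < w) A (wid hpw i) (wid hpw j).

Lemma win_mul (F : finFieldType) p w n (hpw : (p + w <= n)%N) (A B : 'M[F]_n) :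
  UT A -> UT B -> win hpw (A *m B) = win hpw A *m win hpw B.
Proof.
move=> /UTP[A1 _] /UTP[B1 _]; apply/matrixP => i j; rewrite !mxE.
rewrite (bigID (fun k : 'I_n => k \in (wid hpw) @: setT)) /=.
rewrite [X in _ + X]big1 ?addr0; last first.
  move=> k kn.
  have : ~~ ((p <= k) && (k < p + w))%N.
    apply: contra kn => /andP[pk kw].
    have kp : (k - p < w)%N by lia.
    apply/imsetP; exists (Ordinal kp) => //; apply: val_inj => /=; lia.
  rewrite negb_and -!ltnNge => /orP[kp|kp].
    by rewrite A1 ?mul0r //=; move: kp; lia.
  by rewrite B1 ?mulr0 //=; move: kp (ltn_ord j); lia.
rewrite big_imset /=; last by move=> x y _ _ /(congr1 val) /= e; apply: val_inj => /=; lia.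
by apply: eq_big => // k; rewrite ?inE ?mxE.
Qed.

Lemma invmxM (F : finFieldType) n (A B : 'M[F]_n) : A \in unitmx -> B \in unitmx ->
  invmx (A *m B) = invmx B *m invmx A.
Proof.
move=> uA uB; have uAB : A *m B \in unitmx by rewrite unitmx_mul uA uB.
have H : (A *m B) *m (invmx B *m invmx A) = 1%:M.
  by rewrite !mulmxA mulmxK // mulmxV.
by rewrite -[LHS]mulmx1 -H mulmxA mulVmx ?mul1mx.
Qed.

Lemma class_det (F : finFieldType) n (u x : 'M[F]_n) : \det u = 1 ->
  x \in conj_classSL u -> \det x = 1.
Proof.
move=> du /imsetP[g]; rewrite inE => /eqP dg ->.
by rewrite /rop !det_mulmx det_inv dg du !mul1r invr1.
Qed.

Lemma class_unit (F : finFieldType) n (u x : 'M[F]_n) : \det u = 1 ->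
  x \in conj_classSL u -> x \in unitmx.
Proof. by move=> du xO; rewrite unitmxE (class_det du xO) unitr1. Qed.

Lemma class_rop (F : finFieldType) n (u x y : 'M[F]_n) : \det u = 1 ->
  x \in conj_classSL u -> y \in conj_classSL u -> rop x y \in conj_classSL u.
Proof.
move=> du xO yO; have ux := class_unit du xO; have dx := class_det du xO.
move: yO => /imsetP[h]; rewrite inE => /eqP dh ->.
have uh : h \in unitmx by rewrite unitmxE dh unitr1.
apply/imsetP; exists (x *m h); first by rewrite inE det_mulmx dx dh mulr1.
by rewrite /rop invmxM // !mulmxA.
Qed.

Definition phi (F : finFieldType) n (P x : 'M[F]_n) := invmx P *m x *m P.

Lemma phiM (F : finFieldType) n (P x y : 'M[F]_n) : P \in unitmx ->
  phi P (x *m y) = phi P x *m phi P y.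
Proof. by move=> uP; rewrite /phi !mulmxA mulmxK. Qed.

Lemma phi_unit (F : finFieldType) n (P x : 'M[F]_n) : P \in unitmx -> x \in unitmx ->
  phi P x \in unitmx.
Proof. by move=> uP ux; rewrite /phi !unitmx_mul unitmx_inv uP ux. Qed.

Definition Rb (F : finFieldType) n (u P : 'M[F]_n) (c c' : 'I_n) (b : F) : {set 'M[F]_n} :=
  [set x in conj_classSL u | UT (phi P x) && (phi P x c c' == b)].

Lemma Rb_closed (F : finFieldType) n (u P x y : 'M[F]_n) (c c' : 'I_n) b :
  \det u = 1 -> P \in unitmx -> c' = c.+1 :> nat ->
  x \in conj_classSL u -> UT (phi P x) -> y \in Rb u P c c' b -> rop x y \in Rb u P c c' b.
Proof.
move=> du uP hc xO Ux; rewrite !inE => /and3P[yO Uy /eqP yb].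
have ux := class_unit du xO.
have zO := class_rop du xO yO.
have e : rop x y *m x = x *m y by rewrite /rop mulmxKV.
have e' : phi P (rop x y) *m phi P x = phi P x *m phi P y by rewrite -!phiM // e.
have upx := phi_unit uP ux.
have ez : phi P (rop x y) = phi P x *m phi P y *m invmx (phi P x).
  by rewrite -e' mulmxK.
have Uz : UT (phi P (rop x y)).
  rewrite ez; have [k ->] := inv_iter upx; apply: UT_mul; [exact: UT_mul|exact: UT_iter].
rewrite zO Uz /=; apply/eqP.
have := congr1 (fun M : 'M[F]_n => M c c') e'; rewrite /= (chi_mul hc Uz Ux) (chi_mul hc Ux Uy) yb => /eqP.
by rewrite addrC (inj_eq (addrI _)) => /eqP.
Qed.

Lemma typeD_crit (F : finFieldType) n (u P s0 g0 : 'M[F]_n) (c c' : 'I_n) :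
  \det u = 1 -> P \in unitmx -> \det g0 = 1 -> c' = c.+1 :> nat ->
  UT (phi P u) -> UT s0 -> s0 = g0 *m phi P u *m invmx g0 ->
  phi P u c c' = 1 -> s0 c c' = 0 ->
  phi P u *m s0 *m phi P u *m s0 != s0 *m phi P u *m s0 *m phi P u ->
  typeD (conj_classSL u).
Proof.
move=> du uP dg hc UJ Us es0 Jc sc Hne.
have ug : g0 \in unitmx by rewrite unitmxE dg unitr1.
set R1 := Rb u P c c' 1; set R0 := Rb u P c c' 0.
pose s := P *m s0 *m invmx P.
have phis : phi P s = s0 by rewrite /phi /s !mulmxA mulVmx // mul1mx mulmxKV.
have eu : u = P *m phi P u *m invmx P by rewrite /phi !mulmxA mulmxV // mul1mx mulmxK.
have uO : u \in conj_classSL u.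
  apply/imsetP; exists 1%:M; first by rewrite inE det1.
  by rewrite /rop invmx1 mulmx1 mul1mx.
have sO : s \in conj_classSL u.
  apply/imsetP; exists (P *m g0 *m invmx P).
    by rewrite inE !det_mulmx det_inv dg mulr1 mulrV // -unitmxE.
  rewrite /rop /s es0 {1}eu !invmxM ?unitmx_mul ?unitmx_inv ?uP ?ug // invmxK.
  by rewrite !mulmxA !mulmxKV // !mulmxK.
clearbody s.
have uR1 : u \in R1 by rewrite !inE uO UJ Jc eqxx.
have sR0 : s \in R0 by rewrite !inE sO phis Us sc eqxx.
have memY : forall b x, x \in Rb u P c c' b -> (x \in conj_classSL u) && UT (phi P x).
  by move=> b x; rewrite !inE => /and3P[-> -> _].
have clos : forall b x y, x \in R1 :|: R0 -> y \in Rb u P c c' b -> rop x y \in Rb u P c c' b.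
  move=> b x y; rewrite inE => /orP[] /memY /andP[xO Ux] yR; exact: Rb_closed.
have act : forall b, Rb u P c c' b \subset R1 :|: R0 -> act_set (R1 :|: R0) (Rb u P c c' b) = Rb u P c c' b.
  move=> b sub; apply/setP => z; apply/idP/idP.
    by case/imset2P => x y xY yR ->; exact: clos.
  move=> zR; apply/imset2P; exists z z => //.
    exact: (subsetP sub).
  have /andP[zO _] := memY _ _ zR.
  by rewrite /rop mulmxK // (class_unit du zO).
have sub1 : R1 \subset R1 :|: R0 by apply: subsetUl.
have sub0 : R0 \subset R1 :|: R0 by apply: subsetUr.
exists (R1 :|: R0), R1, R0; split.
- apply/subsetP => x; rewrite inE => /orP[] /memY /andP[] //.
- split.
    move=> x y xY; rewrite inE => /orP[yR|yR]; rewrite inE; apply/orP;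
      [left|right]; exact: clos.
  split; first by move=> x y xR yR; apply: clos => //; exact: (subsetP sub1).
  split; first by move=> x y xR yR; apply: clos => //; exact: (subsetP sub0).
  split; first by apply/set0Pn; exists u.
  split; first by apply/set0Pn; exists s.
  split.
    rewrite -setI_eq0; apply/eqP/setP => x; rewrite !inE.
    apply/negbTE/negP => /andP[/and3P[_ _ /eqP ->] /and3P[_ _ /eqP]].
    by apply/eqP; rewrite oner_eq0.
  split; first by [].
  by split; apply: act.
exists u, s; split => //.
apply: contra Hne => /eqP e.
have us : s \in unitmx by apply: (class_unit du sO).
have uu : u \in unitmx by apply: (class_unit du uO).
have e1 := congr1 (fun M => M *m u *m s *m u) e.
rewrite /= /rop !mulmxA mulmxKV // mulmxKV // mulmxKV // in e1.
apply/eqP; rewrite -phis -!phiM // e1 //.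
Qed.

Definition fN (N1 z : nat) : nat :=
  if z == N1.-1 then N1 else if z == N1 then N1.+1 else if z == N1.+1 then N1.-1 else z.

Lemma fN_inj N1 x y : (2 <= N1)%N -> fN N1 x = fN N1 y -> x = y.
Proof. by move=> h; rewrite /fN; repeat (case: eqP; intro); lia. Qed.

Lemma fN_up N1 x y : (2 <= N1)%N -> (y < x)%N -> fN N1 y = (fN N1 x).+1 -> fN N1 y = N1.
Proof. by move=> h; rewrite /fN; repeat (case: eqP; intro); lia. Qed.

Lemma test (p : nat) (b : bool) : ((p == p.+1) || ((p.+1 == p.+1) && (p.+2 != p.+2))) = false.
Proof. lia. Qed.

Lemma tau_val n (om om1 om2 : 'I_n) N1 : nat_of_ord om = N1.-1 -> nat_of_ord om1 = N1 -> nat_of_ord om2 = N1.+1 ->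
  (2 <= N1)%N -> forall z, nat_of_ord ((tperm om om1 * tperm om om2)%g z) = fN N1 (nat_of_ord z).
Proof.
move=> h0 h1 h2 hN z; rewrite permM.
have ne : forall a b : 'I_n, nat_of_ord a <> nat_of_ord b -> a != b.
  by move=> a b hab; apply/eqP => e; apply: hab; rewrite e.
case: (tpermP om om1 z) => [->|->|z0 z1].
- rewrite tpermD ?ne; try lia. rewrite h0 h1 /fN. repeat (case: eqP; intro); lia.
- apply: (etrans (congr1 (@nat_of_ord n) (tpermL om om2))).
  rewrite h1 h2 /fN; repeat (case: eqP; intro); lia.
- have zv0 : nat_of_ord z <> N1.-1 by move=> e; apply: z0; apply: val_inj => /=; rewrite e h0.
  have zv1 : nat_of_ord z <> N1 by move=> e; apply: z1; apply: val_inj => /=; rewrite e h1.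
  case: (tpermP om om2 z) => [e|->|z2 z3]; first by case: z0.
  + rewrite h0 h2 /fN; repeat (case: eqP; intro); lia.
  + have zv2 : nat_of_ord z <> N1.+1 by move=> e; apply: z3; apply: val_inj => /=; rewrite e h2.
    rewrite /fN; repeat (case: eqP; intro); lia.
Qed.

Lemma Jentry (F : finFieldType) n lam (x y : 'I_n) :
  jordan_unip F n lam x y =
  if (nat_of_ord x == nat_of_ord y) || ((nat_of_ord y == (nat_of_ord x).+1) && (nat_of_ord y \notin scanl addn 0 lam)) then 1 else 0.
Proof. by rewrite mxE; case: ifP. Qed.

Lemma UT_J (F : finFieldType) n lam : UT (jordan_unip F n lam).
Proof.
apply/UTP; split; last by move=> x; rewrite Jentry eqxx.
move=> x y yx; rewrite Jentry; case: ifP => // /orP[/eqP h|/andP[/eqP h _]]; exfalso; lia.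
Qed.

Lemma perm_conj (F : finFieldType) n (t : 'S_n) (A : 'M[F]_n) :
  perm_mx t *m A *m invmx (perm_mx t) = \matrix_(i, j) A (t i) (t j).
Proof.
have inv : invmx (perm_mx t : 'M[F]_n) = perm_mx t^-1.
  have H : perm_mx t *m perm_mx t^-1 = 1%:M :> 'M[F]_n by rewrite -perm_mxM mulgV perm_mx1.
  by rewrite -[LHS]mulmx1 -H mulmxA mulVmx ?unitmx_perm // mul1mx.
by rewrite inv -row_permE -col_permE; apply/matrixP => i j; rewrite !mxE.
Qed.

Unset Implicit Arguments.

Theorem mainTheorem12 (F : finFieldType) (n : nat) (u : 'M[F]_n) (lam : seq nat) :
  ~~ odd #|F| ->
  \det u = 1 ->
  unipotent u ->
  unip_type u lam ->
  (exists i : nat, [/\ (i.+1 < size lam)%N,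
                       (nth 0 lam i.+1 <= nth 0 lam i)%N
                     & (3 <= nth 0 lam i.+1)%N]) ->
  typeD (conj_classSL u).
Proof.
move=> _ du _ [_ _ hsum [P uP eu]] [i [hi hle hb]].
have ha : (3 <= nth 0 lam i)%N by apply: leq_trans hb hle.
have [inN hscl hN] := scl_facts hi ha hb.
move: inN hscl hN; set N1 := (sumn (take i lam) + nth 0 lam i)%N => inN hscl hN.
rewrite hsum in hN.
have N1ge : (3 <= N1)%N by rewrite /N1; lia.
have memE : forall y, (N1 - 2 <= y <= N1 + 2)%N -> (y \in scanl addn 0 lam) = (y == N1).
  move=> y hy; apply/idP/eqP => [/hscl [] h|->] //; lia.
have phiu : phi P u = jordan_unip F n lam by rewrite eu /phi !mulmxA mulVmx // mul1mx mulmxKV.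
have hom : (N1.-1 < n)%N by lia.
have hom1 : (N1 < n)%N by lia.
have hom2 : (N1.+1 < n)%N by lia.
have hc : (N1 - 2 < n)%N by lia.
pose om := Ordinal hom; pose om1 := Ordinal hom1; pose om2 := Ordinal hom2; pose c := Ordinal hc.
pose t := (tperm om om1 * tperm om om2)%g.
have tv : forall z, nat_of_ord (t z) = fN N1 (nat_of_ord z).
  by apply: tau_val => //; lia.
pose J := jordan_unip F n lam.
have UJ : UT J by apply: UT_J.
pose s0 := perm_mx t *m J *m invmx (perm_mx t).
have s0E : forall x y, s0 x y = J (t x) (t y) by move=> x y; rewrite /s0 perm_conj mxE.
have Us0 : UT s0.
  apply/UTP; split; last by move=> x; rewrite s0E Jentry eqxx.
  move=> x y yx; rewrite s0E Jentry !tv.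
  case: ifP => // /orP[/eqP /fN_inj e|/andP[/eqP e]]; first by exfalso; move: (e (ltnW N1ge)) yx => ->; lia.
  by rewrite (fN_up _ yx e) ?inN //; lia.
apply: (typeD_crit (s0 := s0) (g0 := perm_mx t) (c := c) (c' := om) du uP); rewrite ?phiu //.
- rewrite det_perm odd_permM !odd_tperm.
  have -> : om != om1 by apply/eqP => /(congr1 (@nat_of_ord n)) /=; lia.
  by have -> : om != om2 by apply/eqP => /(congr1 (@nat_of_ord n)) /=; lia.
- by rewrite /= ; lia.
- rewrite Jentry /= memE; last lia.
  by case: ifP => // h; exfalso; move: h; lia.
- rewrite s0E Jentry !tv /=.
  have -> : fN N1 (N1 - 2) = (N1 - 2)%N by rewrite /fN; repeat (case: eqP; intro); lia.
  have -> : fN N1 N1.-1 = N1 by rewrite /fN; repeat (case: eqP; intro); lia.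
  by case: ifP => // h; exfalso; move: h; lia.
rewrite -/J.
have hpw : (N1 - 3 + 4 <= n)%N by lia.
pose Jw : 'M[F]_4 := \matrix_(a < 4, b < 4)
  if (nat_of_ord a == b) || ((nat_of_ord b == (nat_of_ord a).+1) && (nat_of_ord b != 3%N)) then 1 else 0.
pose Sw : 'M[F]_4 := \matrix_(a < 4, b < 4)
  if [|| nat_of_ord a == b, (nat_of_ord a == 0%N) && (nat_of_ord b == 1%N)
       | (nat_of_ord a == 2%N) && (nat_of_ord b == 3%N)] then 1 else 0.
have condJ : forall a b : nat, (a < 4)%N -> (b < 4)%N ->
   ((N1 - 3 + a == N1 - 3 + b) || ((N1 - 3 + b == (N1 - 3 + a).+1) && (N1 - 3 + b \notin scanl addn 0 lam)))%N
   = ((a == b) || ((b == a.+1) && (b != 3)))%N.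
  move=> a b hx hy; case: (boolP (b == a.+1)) => hab.
    rewrite memE; [lia|lia].
  have -> : (N1 - 3 + b == (N1 - 3 + a).+1)%N = false by apply/negbTE; lia.
  rewrite andFb orbF; lia.
have fv : forall a, (a < 4)%N -> fN N1 (N1 - 3 + a)%N = nth 0%N [:: N1 - 3; N1 - 2; N1; N1.+1]%N a.
  move=> a hx; case: a hx => [|[|[|[|a]]]] hx //=; rewrite /fN; repeat (case: eqP; intro); lia.
have condS : forall a b : nat, (a < 4)%N -> (b < 4)%N ->
   ((fN N1 (N1 - 3 + a) == fN N1 (N1 - 3 + b)) || ((fN N1 (N1 - 3 + b) == (fN N1 (N1 - 3 + a)).+1)
      && (fN N1 (N1 - 3 + b) \notin scanl addn 0 lam)))%N
   = [|| a == b, (a == 0) && (b == 1) | (a == 2) && (b == 3)]%N.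
  move=> a b hx hy; rewrite !fv //.
  case: a hx => [|[|[|[|a]]]] hx //; case: b hy => [|[|[|[|b]]]] hy //=.
  all: try (rewrite memE; [lia|lia]); try lia.
have wJ : win hpw J = Jw.
  by apply/matrixP => a b; rewrite /win mxE [RHS]mxE Jentry /= condJ.
have wS : win hpw s0 = Sw.
  by apply/matrixP => a b; rewrite /win mxE [RHS]mxE s0E Jentry !tv /= condS.
apply/eqP => e.
have := congr1 (fun M : 'M[F]_n => win hpw M (Ordinal (isT : (0 < 4)%N)) (Ordinal (isT : (3 < 4)%N))) e.
have U1 := UT_mul UJ Us0. have U2 := UT_mul U1 UJ. have U1' := UT_mul Us0 UJ. have U2' := UT_mul U1' Us0.
rewrite /= (win_mul hpw U2 Us0) (win_mul hpw U1 UJ) (win_mul hpw UJ Us0).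
rewrite (win_mul hpw U2' UJ) (win_mul hpw U1' Us0) (win_mul hpw Us0 UJ) wJ wS.
rewrite !(mxE, big_ord_recr, big_ord0) /=.
rewrite !(mul1r, mulr1, mul0r, mulr0, add0r, addr0).
by move/eqP; rewrite -subr_eq0 addrK oner_eq0.
Qed.
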